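(* Let $K\in\mathcal{B}(H)$, let $U\in\mathcal{B}(H)$ be invertible, and let $\Lambda=\{(W_j,\Lambda_j,v_j)\}_{j\in J}$ be a $K$-g-fusion frame for $H$. Then $\Gamma=\{(U W_j,\ \Lambda_j P_{W_j}U^{*},\ v_j)\}_{j\in J}$ is a $UKU^{*}$-g-fusion frame for $H$; that is, there exist $0<A'\le B'<\infty$ with $$A'\|(UKU^* )^*f\|^2\le \sum_{j\in J} v_j^2\|\Lambda_jP_{W_j}U^*P_{UW_j}f\|^2\le B'\|f\|^2\quad\forall f\in H.$$
   Context: $H$ is a separable Hilbert space, $J$ a countable index set, $\{H_j\}_{j\in J}$ a family of Hilbert spaces, $\mathcal{B}(H_1,H_2)$ the bounded linear operators, $\mathcal B(H)=\mathcal B(H,H)$, and for a closed subspace $W\subseteq H$, $P_W$ is the orthogonal projection onto $W$. Given closed subspaces $W_j\subseteq H$, positive weights $v_j>0$, operators $\Lambda_j\in\mathcal{B}(H,H_j)$ ($j\in J$) and $K\in\mathcal B(H)$, the family $\Lambda=\{(W_j,\Lambda_j,v_j)\}_{j\in J}$ is called a $K$-g-fusion frame for $H$ (with respect to $\{H_j\}$) if there are constants $0<A\le B<\infty$ such that $A\|K^*f\|^2\le\sum_{j\in J}v_j^2\|\Lambda_jP_{W_j}f\|^2\le B\|f\|^2$ for all $f\in H$. A g-fusion frame is a $K$-g-fusion frame with $K=I_H$, i.e. $A\|f\|^2\le\sum_j v_j^2\|\Lambda_jP_{W_j}f\|^2\le B\|f\|^2$. *)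

(* Defs.v *)
From HB Require Import structures.
From mathcomp Require Import all_boot all_order all_algebra.
From mathcomp Require Import complex.
From mathcomp Require Import all_classical all_reals ereal esum.

Set Implicit Arguments.
Unset Strict Implicit.
Unset Printing Implicit Defensive.

Import Order.TTheory GRing.Theory Num.Theory.
Local Open Scope ring_scope.
Local Open Scope classical_set_scope.

Section HilbertDefs.
Variable R : realType.
Local Notation C := R[i].

Definition inner_axioms (V : lmodType C) (ip : V -> V -> C) : Prop :=
  [/\ forall (a : C) (x y z : V), ip (a *: x + y) z = a * ip x z + ip y z,
      forall x y : V, ip x y = conjc (ip y x),
      forall x : V, 0 <= complex.Re (ip x x) /\ complex.Im (ip x x) = 0
    & forall x : V, ip x x = 0 -> x = 0].

Definition ipnorm (V : lmodType C) (ip : V -> V -> C) (x : V) : R :=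
  Num.sqrt (complex.Re (ip x x)).

Definition ip_complete (V : lmodType C) (ip : V -> V -> C) : Prop :=
  forall u : nat -> V,
    (forall e : R, 0 < e -> exists N, forall m n, (N <= m)%N -> (N <= n)%N ->
       ipnorm ip (u m - u n) < e) ->
    exists l : V, forall e : R, 0 < e -> exists N, forall n, (N <= n)%N ->
       ipnorm ip (u n - l) < e.

Record hilbert := Hilbert {
  hcar :> lmodType C;
  hinner : hcar -> hcar -> C;
  hinner_axioms : inner_axioms hinner;
  hcomplete : ip_complete hinner }.

Definition hnorm (H : hilbert) (x : H) : R := ipnorm (@hinner H) x.

Definition separable (H : hilbert) : Prop :=
  exists d : nat -> H, forall (x : H) (e : R), 0 < e ->
    exists n, hnorm (x - d n) < e.

Definition closed_subspace (H : hilbert) (W : set H) : Prop :=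
  [/\ W 0,
      forall (a : C) (x y : H), W x -> W y -> W (a *: x + y)
    & forall (u : nat -> H) (l : H), (forall n, W (u n)) ->
        (forall e : R, 0 < e -> exists N, forall n, (N <= n)%N ->
           hnorm (u n - l) < e) -> W l].

Definition bounded_op (H1 H2 : hilbert) (T : H1 -> H2) : Prop :=
  (forall (a : C) (x y : H1), T (a *: x + y) = a *: T x + T y) /\
  exists c : R, forall x : H1, hnorm (T x) <= c * hnorm x.

Definition invertible_op (H : hilbert) (U : H -> H) : Prop :=
  bounded_op U /\ exists V : H -> H, [/\ bounded_op V, U \o V = id & V \o U = id].

Definition is_adjoint (H1 H2 : hilbert) (T : H1 -> H2) (S : H2 -> H1) : Prop :=
  forall (x : H1) (y : H2), hinner (T x) y = hinner x (S y).

(* Orthogonal projection P_W onto W: P_W x is the (unique, for W a closed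
   subspace) y in W with x - y orthogonal to W. *)
Definition orthproj (H : hilbert) (W : set H) (x : H) : H :=
  match pselect (exists y : H, W y /\ forall w, W w -> hinner (x - y) w = 0) with
  | left e => projT1 (cid e)
  | right _ => 0
  end.

Definition KgFF (H : hilbert) (J : countType) (Hs : J -> hilbert)
    (K : H -> H) (W : J -> set H) (Lam : forall j, H -> Hs j) (v : J -> R) : Prop :=
  [/\ forall j, closed_subspace (W j),
      forall j, bounded_op (Lam j),
      forall j, 0 < v j
    & exists Ks : H -> H, is_adjoint K Ks /\
      exists A B : R, [/\ 0 < A, A <= B &
        forall f : H,
          ((A * hnorm (Ks f) ^+ 2)%:E <=
             \esum_(j in [set: J]) (v j ^+ 2 * hnorm (Lam j (orthproj (W j) f)) ^+ 2)%:E)%E /\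
          (\esum_(j in [set: J]) (v j ^+ 2 * hnorm (Lam j (orthproj (W j) f)) ^+ 2)%:E <=
             (B * hnorm f ^+ 2)%:E)%E]].

End HilbertDefs.

(* Main.v *)
Require Import Defs.
From HB Require Import structures.
From mathcomp Require Import all_boot all_order all_algebra.
From mathcomp Require Import complex.
From mathcomp Require Import all_classical all_reals ereal esum.
From mathcomp Require Import ring lra.

Set Implicit Arguments.
Unset Strict Implicit.
Unset Printing Implicit Defensive.
Import Order.TTheory GRing.Theory Num.Theory.
Local Open Scope ring_scope.
Local Open Scope classical_set_scope.

Ltac ceq := rewrite /=; apply/eqP; rewrite eq_complex /=; apply/andP; split; apply/eqP; ring.

Section IP.
Variable R : realType.
Variable H : hilbert R.
Local Notation C := R[i].
Local Notation ip := (@hinner R H).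
Local Notation hn := (@hnorm R H).

Lemma ipDZl (a : C) (x y z : H) : ip (a *: x + y) z = a * ip x z + ip y z.
Proof. by have [? ? ? ?] := hinner_axioms H; auto. Qed.
Lemma ipC (x y : H) : ip x y = conjc (ip y x).
Proof. by have [? ? ? ?] := hinner_axioms H; auto. Qed.
Lemma ip_pos (x : H) : 0 <= complex.Re (ip x x) /\ complex.Im (ip x x) = 0.
Proof. by have [? ? ? ?] := hinner_axioms H; auto. Qed.
Lemma ip_def (x : H) : ip x x = 0 -> x = 0.
Proof. by have [? ? ? ?] := hinner_axioms H; auto. Qed.

Lemma cjD (a b : C) : conjc (a + b) = conjc a + conjc b.
Proof. by case: a => a1 a2; case: b => b1 b2; simpc; ceq. Qed.
Lemma cjM (a b : C) : conjc (a * b) = conjc a * conjc b.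
Proof. by case: a => a1 a2; case: b => b1 b2; simpc; ceq. Qed.
Lemma cjN (a : C) : conjc (- a) = - conjc a.
Proof. by case: a => a1 a2; simpc; ceq. Qed.

Lemma ip0l (z : H) : ip 0 z = 0.
Proof.
have := ipDZl 1 0 0 z; rewrite scale1r addr0 mul1r => h.
by apply: (@addrI _ (ip 0 z)); rewrite addr0 -h.
Qed.
Lemma ipDl (x y z : H) : ip (x + y) z = ip x z + ip y z.
Proof. by rewrite -[x in LHS]scale1r ipDZl mul1r. Qed.
Lemma ipZl a (x z : H) : ip (a *: x) z = a * ip x z.
Proof. by rewrite -[_ *: _]addr0 ipDZl ip0l addr0. Qed.
Lemma ipNl (x z : H) : ip (- x) z = - ip x z.
Proof. by rewrite -scaleN1r ipZl mulN1r. Qed.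
Lemma ipBl (x y z : H) : ip (x - y) z = ip x z - ip y z.
Proof. by rewrite ipDl ipNl. Qed.
Lemma ip0r (z : H) : ip z 0 = 0.
Proof. by rewrite ipC ip0l conjc0. Qed.
Lemma ipDr (x y z : H) : ip z (x + y) = ip z x + ip z y.
Proof. by rewrite ipC ipDl cjD -!ipC. Qed.
Lemma ipZr a (x z : H) : ip z (a *: x) = conjc a * ip z x.
Proof. by rewrite ipC ipZl cjM -ipC. Qed.
Lemma ipNr (x z : H) : ip z (- x) = - ip z x.
Proof. by rewrite ipC ipNl cjN -ipC. Qed.
Lemma ipBr (x y z : H) : ip z (x - y) = ip z x - ip z y.
Proof. by rewrite ipDr ipNr. Qed.

Definition nsq (x : H) : R := complex.Re (ip x x).
Lemma nsq_ge0 x : 0 <= nsq x. Proof. by case: (ip_pos x). Qed.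
Lemma ipxx x : ip x x = (nsq x)%:C%C.
Proof. rewrite /nsq; case: (ip_pos x); case: (ip x x) => a b /= _ ->. by []. Qed.
Lemma hnorm_sqr x : hn x ^+ 2 = nsq x.
Proof. by rewrite /hnorm /ipnorm sqr_sqrtr // nsq_ge0. Qed.
Lemma hnorm_ge0 (x : H) : 0 <= hn x. Proof. exact: sqrtr_ge0. Qed.
Lemma nsq0 x : nsq x = 0 -> x = 0.
Proof. by move=> h; apply: ip_def; rewrite ipxx h. Qed.

Lemma ReJ (z : C) : complex.Re (conjc z) = complex.Re z.
Proof. by case: z. Qed.

Lemma nsqD x y : nsq (x + y) = nsq x + 2 * complex.Re (ip x y) + nsq y.
Proof.
rewrite /nsq ipDl !ipDr [ip y x]ipC.
rewrite !raddfD /= ReJ; ring.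
Qed.

Lemma nsqZ a x : nsq (a *: x) = (complex.Re a ^+ 2 + complex.Im a ^+ 2) * nsq x.
Proof.
rewrite /nsq ipZl ipZr ipxx; case: a => a b /=; simpc => /=. ring.
Qed.


Lemma Re0 : complex.Re (0 : C) = 0. Proof. by []. Qed.
Lemma ReM_real (r : R) (z : C) : complex.Re (r%:C%C * z) = r * complex.Re z.
Proof. by case: z => a b /=; simpc => /=; ring. Qed.

Lemma nsq_lin (s t : R) x y : nsq (s%:C%C *: x + t%:C%C *: y) =
  s ^+ 2 * nsq x + 2 * s * t * complex.Re (ip x y) + t ^+ 2 * nsq y.
Proof.
rewrite nsqD !nsqZ ipZl ipZr conjc_real mulrA -rmorphM ReM_real /=.
rewrite !expr0n /= !addr0; ring.
Qed.

Lemma hn_le (x : H) (a : R) : 0 <= a -> nsq x <= a ^+ 2 -> hn x <= a.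
Proof.
move=> a0 h; rewrite /hnorm /ipnorm -[a]ger0_norm // -sqrtr_sqr ler_sqrt //.
exact: sqr_ge0.
Qed.

Lemma hn_lt (x : H) (a : R) : 0 < a -> nsq x < a ^+ 2 -> hn x < a.
Proof.
move=> a0 h; rewrite /hnorm /ipnorm -[a]gtr0_norm // -sqrtr_sqr ltr_sqrt //.
by rewrite exprn_gt0.
Qed.

Lemma hn0 x : hn x = 0 -> x = 0.
Proof. by move=> h; apply: nsq0; rewrite -hnorm_sqr h expr0n. Qed.

Lemma CS x y : complex.Re (ip x y) <= hn x * hn y.
Proof.
have [p0|] := eqVneq (hn x) 0.
  rewrite (hn0 p0) ip0l Re0. exact: (mulr_ge0 (hnorm_ge0 0) (hnorm_ge0 y)).
have [q0|] := eqVneq (hn y) 0.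
  by rewrite (hn0 q0) ip0r Re0 => _; exact: (mulr_ge0 (hnorm_ge0 x) (hnorm_ge0 0)).
move=> qn0 pn0.
have pp : 0 < hn x by rewrite lt_def pn0 hnorm_ge0.
have qp : 0 < hn y by rewrite lt_def qn0 hnorm_ge0.
have := nsq_ge0 ((hn y)%:C%C *: x + (- hn x)%:C%C *: y).
rewrite nsq_lin -!hnorm_sqr => h.
have pq : 0 < 2 * (hn x * hn y) by rewrite mulr_gt0 // mulr_gt0.
rewrite -(ler_pM2l pq).
nra.
Qed.

Lemma hn_tri x y : hn (x + y) <= hn x + hn y.
Proof.
apply: hn_le; first by rewrite addr_ge0 // hnorm_ge0.
rewrite nsqD -!hnorm_sqr; have := CS x y; nra.
Qed.

Lemma nsq_orth x y : ip x y = 0 -> nsq (x + y) = nsq x + nsq y.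
Proof. by move=> h; rewrite nsqD h /= mulr0 addr0. Qed.

Lemma nsqN x : nsq (- x) = nsq x.
Proof. by rewrite /nsq ipNl ipNr opprK. Qed.

Lemma parallelogram a b : nsq (a + b) + nsq (a - b) = 2 * nsq a + 2 * nsq b.
Proof. rewrite !nsqD ipNr nsqN raddfN /=; ring. Qed.

Lemma small_inv (eps : R) : 0 < eps ->
  exists N, forall n, (N <= n)%N -> (n.+1%:R : R)^-1 < eps.
Proof.
move=> e0; exists (Num.truncn (eps^-1)) => n hn.
have h1 := truncnS_gt (eps^-1).
have h2 : (Num.truncn eps^-1).+1%:R <= n.+1%:R :> R by rewrite ler_nat ltnS.
rewrite -[eps]invrK ltf_pV2 ?posrE ?invr_gt0 ?ltr0n //.
exact: lt_le_trans h1 h2.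
Qed.

Lemma quad0 (a b : R) : (forall s, 2 * s * a <= s ^+ 2 * b) -> a = 0.
Proof.
move=> h; have [k [hk1 hk2]] : exists k : R, k = `|b| + 1 /\ True by exists (`|b| + 1).
have k0 : 0 < k by rewrite hk1 ltr_pwDr // normr_ge0.
have hb : b <= k - 1 by rewrite hk1 addrK ler_norm.
have [s hs] : exists s : R, s * k = a by exists (a / k); rewrite divfK // gt_eqF.
have h1 := h s.
have h3 : 0 <= s ^+ 2 * (k - 1 - b) by rewrite mulr_ge0 ?sqr_ge0 // subr_ge0.
have s2 : s ^+ 2 * (k + 1) <= 0.
  have e : a = s * k by rewrite hs.
  rewrite e in h1; nra.
have s0 : s = 0.
  apply/eqP; rewrite -sqrf_eq0; apply/eqP/le_anti/andP; split; last exact: sqr_ge0.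
  by rewrite -(pmulr_lle0 _ (_ : 0 < k + 1)) // addr_gt0.
by rewrite -hs s0 mul0r.
Qed.

End IP.

Section Proj.
Variable R : realType.
Variable H : hilbert R.
Local Notation C := R[i].
Local Notation ip := (@hinner R H).
Local Notation hn := (@hnorm R H).
Local Notation nsq := (@nsq R H).
Variable W : set H.
Hypothesis hW : closed_subspace W.

Lemma W0 : W 0. Proof. by case: hW. Qed.
Lemma WDZ a x y : W x -> W y -> W (a *: x + y). Proof. by case: hW => _ h _; apply: h. Qed.
Lemma WZ a x : W x -> W (a *: x). Proof. by move=> h; rewrite -[_ *: _]addr0; apply: WDZ => //; exact: W0. Qed.
Lemma WD x y : W x -> W y -> W (x + y). Proof. by move=> h1 h2; rewrite -[x]scale1r; apply: WDZ. Qed.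
Lemma WB x y : W x -> W y -> W (x - y).
Proof. by move=> h1 h2; rewrite addrC -scaleN1r; apply: WDZ. Qed.

Lemma rcM (r s : R) : (r%:C * s%:C)%C = (r * s)%:C%C :> C.
Proof. by simpc. Qed.

Lemma proj_exists x : exists y, W y /\ forall w, W w -> ip (x - y) w = 0.
Proof.
pose D := [set r | exists w, W w /\ r = nsq (x - w)].
have hD : has_inf D.
  split; first by exists (nsq (x - 0)); exists 0; split => //; exact: W0.
  by exists 0 => r [w [_ ->]]; exact: nsq_ge0.
pose d := inf D.
have dlb : forall w, W w -> d <= nsq (x - w).
  by move=> w hw; apply: (ge_inf hD.2); exists w.
have d0 : 0 <= d by apply: lb_le_inf; [exact: hD.1 | move=> r [w [_ ->]]; exact: nsq_ge0].
have ex : forall n : nat, exists w, W w /\ nsq (x - w) < d + (n.+1%:R)^-1.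
  move=> n; have pos : 0 < (n.+1%:R : R)^-1 by rewrite invr_gt0 ltr0n.
  have [r [w [hw ->]] hr] := inf_adherent pos hD.
  by exists w.
have [f hf] := choice ex.
have cau : forall m n, nsq (f m - f n) <= 2 * (m.+1%:R)^-1 + 2 * (n.+1%:R)^-1.
  move=> m n.
  pose half := ((2:R)^-1)%:C%C.
  pose mid := half *: f m + half *: f n.
  have Wmid : W mid by apply: WD; apply: WZ; [exact: (hf m).1 | exact: (hf n).1].
  have e1 : (x - f m) + (x - f n) = ((2:R)%:C%C) *: (x - mid).
    rewrite scalerBr /mid scalerDr !scalerA /half rcM mulfV ?pnatr_eq0 //.
    rewrite !scale1r (_ : (2:R)%:C%C = 1 + 1) ?scalerDl ?scale1r; last by simpc.
    by rewrite opprD !addrA; congr (_ + _); rewrite addrAC.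
  have e2 : (x - f m) - (x - f n) = f n - f m by rewrite opprB addrC addrA subrK.
  have := parallelogram (x - f m) (x - f n).
  rewrite e1 e2 nsqZ /= expr0n /= addr0 => hp.
  have h1 := dlb _ Wmid.
  have := (hf m).2; have := (hf n).2.
  rewrite -[nsq (f m - f n)]nsqN opprB => ha hb.
  have e4 : (2:R) ^+ 2 = 4 by rewrite expr2; lra.
  rewrite e4 in hp.
  move: hp h1 ha hb.
  set a1 := nsq (x - mid); set a2 := nsq (f n - f m); set a3 := nsq (x - f m).
  set a4 := nsq (x - f n).
  rewrite !mulr_natl.
  set em := (m.+1%:R : R)^-1; set en := (n.+1%:R : R)^-1.
  clearbody em en a1 a2 a3 a4 d.
  move=> *; lra.
have cauchy : forall e : R, 0 < e -> exists N, forall m n, (N <= m)%N -> (N <= n)%N ->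
    hn (f m - f n) < e.
  move=> e e0; have e2 : 0 < e ^+ 2 / 4 by rewrite divr_gt0 // exprn_gt0.
  have [N hN] := small_inv e2; exists N => m n hm hn'.
  apply: hn_lt => //; apply: le_lt_trans (cau m n) _.
  have := hN _ hm; have := hN _ hn'.
  set em := (m.+1%:R : R)^-1; set en := (n.+1%:R : R)^-1.
  set E := e ^+ 2; clearbody em en E => *; lra.
have [l hl] := @hcomplete R H f cauchy.
have Wl : W l by case: hW => _ _ hc; apply: hc (fun n => (hf n).1) hl.
have dl : nsq (x - l) <= d.
  apply/ler_addgt0Pr => e e0.
  pose k := 2 * d + e + 3.
  have k0 : 0 < k by rewrite /k; lra.
  have e20 : 0 < e / 2 by rewrite divr_gt0.
  have [N1 hN1] := small_inv e20.
  have [N2 hN2] := hl 1 ltr01.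
  have ek0 : 0 < e / (2 * k) by rewrite divr_gt0 // mulr_gt0.
  have [N3 hN3] := hl (e / (2 * k)) ek0.
  pose n := maxn N1 (maxn N2 N3).
  have hn1 := hN1 n (leq_maxl _ _).
  have hn2 : hn (f n - l) < 1 by apply: hN2; rewrite /n leq_max leq_maxl orbT.
  have hn3 : hn (f n - l) < e / (2 * k) by apply: hN3; rewrite /n leq_max leq_maxr orbT.
  have hfn := (hf n).2.
  have e1 : x - l = (x - f n) + (f n - l) by rewrite addrA subrK.
  rewrite e1 nsqD.
  have cs := CS (x - f n) (f n - l).
  have t0 := hnorm_ge0 (f n - l).
  have u0 := hnorm_ge0 (x - f n).
  have tt : nsq (f n - l) <= hn (f n - l) by rewrite -hnorm_sqr; nra.
  have uu : hn (x - f n) <= 1 + nsq (x - f n) by rewrite -hnorm_sqr; nra.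
  have ut : hn (x - f n) * hn (f n - l) <= (1 + d + e / 2) * hn (f n - l).
    apply: ler_wpM2r => //; move: uu hfn hn1.
    set en := (n.+1%:R : R)^-1; clearbody en => *; lra.
  have kt : k * hn (f n - l) < e / 2.
    have ekk : k * (e / (2 * k)) = e / 2.
      by field; rewrite gt_eqF.
    by rewrite -ekk ltr_pM2l.
  move: cs tt uu ut kt hn1 hfn.
  set u := hn (x - f n); set t := hn (f n - l); set a := nsq (x - f n); set b := nsq (f n - l).
  set r := complex.Re _; set en := (n.+1%:R : R)^-1.
  rewrite /k; clearbody u t a b r en d => *; lra.
exists l; split => // w hw.
have hq : forall c : C, d <= nsq (x - l) + 2 * complex.Re (conjc (- c) * ip (x - l) w)
    + (complex.Re (- c) ^+ 2 + complex.Im (- c) ^+ 2) * nsq w.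
  move=> c; have := dlb _ (WDZ c hw Wl).
  have -> : x - (c *: w + l) = (x - l) + (- c) *: w by rewrite opprD addrA addrAC scaleNr.
  by rewrite nsqD nsqZ ipZr.
have dl' := dl.
case E : (ip (x - l) w) hq => [g1 g2] hq.
have q1 : g1 = 0.
  apply: (@quad0 _ g1 (nsq w)) => s; have := hq (Complex s 0).
  simpc => /=. move: dl'; set z := nsq (x - l); set q := nsq w; clearbody z q d => *. nra.
have q2 : g2 = 0.
  apply: (@quad0 _ g2 (nsq w)) => s; have := hq (Complex 0 s).
  simpc => /=. move: dl'; set z := nsq (x - l); set q := nsq w; clearbody z q d => *. nra.
by rewrite q1 q2.
Qed.

Lemma orthproj_spec x : W (orthproj W x) /\ forall w, W w -> ip (x - orthproj W x) w = 0.
Proof.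
rewrite /orthproj; case: pselect => [e|ne]; first by case: (cid e).
by exfalso; apply: ne; exact: proj_exists.
Qed.

Lemma orthproj_uniq x y : W y -> (forall w, W w -> ip (x - y) w = 0) -> orthproj W x = y.
Proof.
move=> Wy hy; have [Wp hp] := orthproj_spec x.
have Wd : W (orthproj W x - y) by apply: WB.
have e : orthproj W x - y = (x - y) - (x - orthproj W x).
  by rewrite [RHS]addrC opprB addrA subrK.
have key : ip (orthproj W x - y) (orthproj W x - y) = 0.
  by rewrite {1}e ipBl (hy _ Wd) (hp _ Wd) subrr.
by apply/eqP; rewrite -subr_eq0; apply/eqP; exact: ip_def key.
Qed.

Lemma orthproj_lin a x y : orthproj W (a *: x + y) = a *: orthproj W x + orthproj W y.
Proof.
have [Wx hx] := orthproj_spec x; have [Wy hy] := orthproj_spec y.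
apply: orthproj_uniq; first exact: WDZ.
move=> w hw.
have -> : a *: x + y - (a *: orthproj W x + orthproj W y) =
          a *: (x - orthproj W x) + (y - orthproj W y).
  by rewrite scalerBr opprD addrACA.
by rewrite ipDl ipZl hx // hy // mulr0 addr0.
Qed.

Lemma orthproj_perp x : (forall w, W w -> ip x w = 0) -> orthproj W x = 0.
Proof. by move=> h; apply: orthproj_uniq; [exact: W0 | move=> w hw; rewrite subr0 h]. Qed.

Lemma orthproj_le x : hn (orthproj W x) <= hn x.
Proof.
have [Wx hx] := orthproj_spec x.
apply: hn_le; first exact: hnorm_ge0.
have ex : orthproj W x + (x - orthproj W x) = x by rewrite addrC subrK.
have e0 : ip (orthproj W x) (x - orthproj W x) = 0 by rewrite ipC hx // conjc0.
have := nsqD (orthproj W x) (x - orthproj W x).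
rewrite e0 ex Re0 mulr0 addr0 hnorm_sqr => ->.
rewrite lerDl; exact: nsq_ge0.
Qed.

Lemma orthproj_bounded : bounded_op (orthproj W).
Proof.
split; first by move=> a x y; rewrite orthproj_lin.
by exists 1 => x; rewrite mul1r orthproj_le.
Qed.

End Proj.

Section Ops.
Variable R : realType.
Local Notation C := R[i].

Lemma lin0 (H1 H2 : hilbert R) (T : H1 -> H2) :
  (forall (a : C) x y, T (a *: x + y) = a *: T x + T y) -> T 0 = 0.
Proof.
move=> hT; have := hT 1 0 0; rewrite scale1r addr0 scale1r => h.
by apply: (@addrI _ (T 0)); rewrite addr0 -h.
Qed.

Lemma linB (H1 H2 : hilbert R) (T : H1 -> H2) :
  (forall (a : C) x y, T (a *: x + y) = a *: T x + T y) -> forall x y, T (x - y) = T x - T y.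
Proof. by move=> hT x y; rewrite addrC -scaleN1r hT scaleN1r addrC. Qed.

Lemma bnd_nonneg (H1 H2 : hilbert R) (T : H1 -> H2) : bounded_op T ->
  exists c, 0 <= c /\ forall x, hnorm (T x) <= c * hnorm x.
Proof.
move=> [_ [c hc]]; exists `|c|; split => // x.
apply: le_trans (hc x) _; apply: ler_wpM2r; [exact: hnorm_ge0 | exact: ler_norm].
Qed.

Lemma bnd_comp (H1 H2 H3 : hilbert R) (T : H1 -> H2) (S : H2 -> H3) :
  bounded_op T -> bounded_op S -> bounded_op (fun x => S (T x)).
Proof.
move=> hT hS; split; first by move=> a x y; rewrite hT.1 hS.1.
have [cT [cT0 hcT]] := bnd_nonneg hT; have [cS [cS0 hcS]] := bnd_nonneg hS.
exists (cS * cT) => x; apply: le_trans (hcS _) _.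
by rewrite -mulrA ler_wpM2l.
Qed.

Lemma adj_sym (H : hilbert R) (U Us : H -> H) : is_adjoint U Us ->
  forall x z, hinner (Us x) z = hinner x (U z).
Proof. by move=> hU x z; rewrite ipC -hU -ipC. Qed.

Lemma adj_bounded (H : hilbert R) (U Us : H -> H) : bounded_op U -> is_adjoint U Us ->
  bounded_op Us.
Proof.
move=> hU hUs; split.
  move=> a y z; set v := Us (a *: y + z) - (a *: Us y + Us z).
  have hv : forall x, hinner x v = 0.
    move=> x; rewrite /v ipBr ipDr ipZr -!hUs ipDr ipZr subrr //.
  by apply/eqP; rewrite -subr_eq0; apply/eqP; apply: ip_def; exact: hv.
have [c [c0 hc]] := bnd_nonneg hU; exists c => y.
have h1 : nsq (Us y) <= hnorm (U (Us y)) * hnorm y.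
  by rewrite /nsq -hUs; exact: CS.
have h2 := hc (Us y).
rewrite -hnorm_sqr in h1.
have u0 := hnorm_ge0 (Us y); have y0 := hnorm_ge0 y.
have p0 : 0 <= c * hnorm y by rewrite mulr_ge0.
have h3 : hnorm (U (Us y)) * hnorm y <= (c * hnorm (Us y)) * hnorm y by apply: ler_wpM2r.
have h4 : hnorm (Us y) ^+ 2 <= hnorm (Us y) * (c * hnorm y).
  apply: le_trans h1 (le_trans h3 _); rewrite mulrCA mulrA; exact: lexx.
move: u0 p0 h4; set u := hnorm (Us y); set p := c * hnorm y.
clearbody u p => *; nra.
Qed.

Lemma closed_image (H : hilbert R) (U : H -> H) (W : set H) :
  invertible_op U -> closed_subspace W -> closed_subspace (U @` W).
Proof.
move=> [hU [V [hV hUV hVU]]] hW.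
have UV x : U (V x) = x by have := congr1 (fun f => f x) hUV.
have VU x : V (U x) = x by have := congr1 (fun f => f x) hVU.
split.
- by exists 0; [exact: W0 | exact: lin0 hU.1].
- move=> a _ _ [x1 h1 <-] [x2 h2 <-]; exists (a *: x1 + x2); first exact: WDZ.
  by rewrite hU.1.
- move=> u l hu hl.
  have [cV [cV0 hcV]] := bnd_nonneg hV.
  exists (V l); last exact: UV.
  case: hW => _ _ hc; apply: (hc (fun n => V (u n))).
    by move=> n; case: (hu n) => w hw <-; rewrite VU.
  move=> e e0.
  have e1 : 0 < e / (cV + 1) by rewrite divr_gt0 // ltr_wpDl.
  have [N hN] := hl _ e1; exists N => n hn.
  rewrite -linB; last exact: hV.1.
  apply: le_lt_trans (hcV _) _.
  have := hN n hn; have := hnorm_ge0 (u n - l).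
  have ekk : (cV + 1) * (e / (cV + 1)) = e by field; rewrite gt_eqF // ltr_wpDl.
  move: ekk; set t := hnorm (u n - l); set q := e / (cV + 1); clearbody t q => *; nra.
Qed.

End Ops.

Unset Implicit Arguments.
Set Strict Implicit.

Theorem theorem3p1 (R : realType) (H : hilbert R) (Hsep : separable H)
    (J : countType) (Hs : J -> hilbert R)
    (W : J -> set H) (Lam : forall j, H -> Hs j) (v : J -> R)
    (K U Us : H -> H)
    (HK : bounded_op K) (HU : invertible_op U) (HUs : is_adjoint U Us) :
  KgFF K W Lam v ->
  KgFF (U \o K \o Us) (fun j => U @` W j)
       (fun j => Lam j \o orthproj (W j) \o Us) v.
Proof.
move=> [hWc hLam hv [Ks [hKs [A [B [A0 AB hAB]]]]]].
have hUb := HU.1.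
have hUsb := adj_bounded hUb HUs.
have [cU [cU0 hcU]] := bnd_nonneg hUb.
have [cS [cS0 hcS]] := bnd_nonneg hUsb.
have key : forall j f, orthproj (W j) (Us (orthproj (U @` W j) f)) = orthproj (W j) (Us f).
  move=> j f.
  have hcl := closed_image HU (hWc j).
  have [_ hp] := orthproj_spec hcl f.
  have e : Us (orthproj (U @` W j) f) = Us f - Us (f - orthproj (U @` W j) f).
    by rewrite -(linB hUsb.1) opprB addrC subrK.
  rewrite e (linB (orthproj_bounded (hWc j)).1).
  rewrite (@orthproj_perp _ _ _ (hWc j) (Us (f - _))) ?subr0 //.
  move=> w hw; rewrite (adj_sym HUs) hp //; by exists w.
split.
- by move=> j; exact: closed_image.
- move=> j; apply: bnd_comp hUsb _; apply: bnd_comp (hLam j).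
  exact: orthproj_bounded.
- exact: hv.
exists (U \o Ks \o Us); split.
  by move=> x y /=; rewrite HUs hKs (adj_sym HUs).
pose A' := A / (cU ^+ 2 + 1).
have d0 : 0 < cU ^+ 2 + 1 by rewrite ltr_wpDl // sqr_ge0.
have A'0 : 0 < A' by rewrite divr_gt0.
exists A', (Num.max A' (B * cS ^+ 2)); split => //; first by rewrite le_max lexx.
move=> f.
have E : \esum_(j in [set: J]) (v j ^+ 2 * hnorm ((Lam j \o orthproj (W j) \o Us)
            (orthproj (U @` W j) f)) ^+ 2)%:E =
         \esum_(j in [set: J]) (v j ^+ 2 * hnorm (Lam j (orthproj (W j) (Us f))) ^+ 2)%:E.
  by apply: eq_esum => j _ /=; rewrite key.
rewrite E; have [h1 h2] := hAB (Us f); split.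
- apply: le_trans h1; rewrite lee_fin /=.
  have g := hcU (Ks (Us f)).
  have u0 := hnorm_ge0 (U (Ks (Us f))).
  have k0 := hnorm_ge0 (Ks (Us f)).
  have ekk : A' * (cU ^+ 2 + 1) = A by rewrite /A' divfK // gt_eqF.
  have sq : hnorm (U (Ks (Us f))) ^+ 2 <= cU ^+ 2 * hnorm (Ks (Us f)) ^+ 2.
    by rewrite -exprMn ler_pXn2r // ?nnegrE ?mulr_ge0.
  rewrite -ekk -mulrA ler_pM2l //; apply: le_trans sq _.
  by rewrite ler_wpM2r ?sqr_ge0 // lerDl.

- apply: le_trans h2 _; rewrite lee_fin.
  have g := hcS f.
  have u0 := hnorm_ge0 (Us f).
  have k0 := hnorm_ge0 f.
  have m1 : B * cS ^+ 2 <= Num.max A' (B * cS ^+ 2) by rewrite le_max lexx orbT.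
  have sq : hnorm (Us f) ^+ 2 <= cS ^+ 2 * hnorm f ^+ 2.
    by rewrite -exprMn ler_pXn2r // ?nnegrE ?mulr_ge0.
  have B0 : 0 <= B by apply: le_trans AB; exact: ltW.
  apply: le_trans (_ : B * (cS ^+ 2 * hnorm f ^+ 2) <= _); first exact: ler_wpM2l.
  by rewrite mulrA ler_wpM2r ?sqr_ge0.
Qed.
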